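(* Define, for integers $n,m,p\ge0$, $$\mathcal{Z}_{n,m}(p)=\binom{m+p}{p}\sum_{k=0}^{m}s(m,k)\,\mathcal{B}_{n+k,p}.$$ Then for all integers $n,m,p\ge0$, $$\mathcal{Z}_{n+1,m}(p)=\frac{m+1}{m+p+1}\,\mathcal{Z}_{n,m+1}(p)+m\,\mathcal{Z}_{n,m}(p),$$ and $\mathcal{Z}_{0,m}(p)=1$, $\mathcal{Z}_{n,0}(p)=\mathcal{B}_{n,p}$.
   Context: $s(m,k)$ are the signed Stirling numbers of the first kind, defined by $x(x-1)\cdots(x-m+1)=\sum_{k=0}^m s(m,k)x^k$. For an integer $p\ge0$, the $p$-Bell numbers $\mathcal{B}_{n,p}$ are defined by $\sum_{n\ge0}\mathcal{B}_{n,p}\frac{z^n}{n!}=\sum_{n\ge0}\binom{n+p}{p}^{-1}\frac{(e^z-1)^n}{n!}$. *)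

(* Defs.v *)
From mathcomp Require Import all_boot all_order all_algebra.
Set Implicit Arguments. Unset Strict Implicit. Unset Printing Implicit Defensive.
Import GRing.Theory Num.Theory.
Local Open Scope ring_scope.

Definition stirling1 (m k : nat) : int :=
  (\prod_(i < m) ('X - (i%:R)%:P) : {poly int})`_k.

Definition expm1_trunc (N : nat) : {poly rat} :=
  \sum_(1 <= j < N.+1) (j`!%:R)^-1 *: 'X^j.

(* p-Bell numbers: n! times the coefficient of z^n in
   \sum_k binom(k+p,p)^-1 (e^z-1)^k / k!.  Terms with k > n and monomials
   of e^z of degree > n do not contribute to the z^n coefficient, so the
   truncations below are exact. *)
Definition pBell (n p : nat) : rat :=
  n`!%:R *
  (\sum_(k < n.+1) (('C(k + p, p)%:R)^-1 * (k`!%:R)^-1) *: (expm1_trunc n) ^+ k)`_n.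

Definition Zpb (n m p : nat) : rat :=
  'C(m + p, p)%:R * \sum_(k < m.+1) (stirling1 m k)%:~R * pBell (n + k) p.

(* Main.v *)
Require Import Defs.
From mathcomp Require Import all_boot all_order all_algebra.
From mathcomp Require Import ring.
Import GRing.Theory Num.Theory.
Local Open Scope ring_scope.

Definition E (M : nat) : {poly rat} := \sum_(j < M.+1) (j`!%:R)^-1 *: 'X^j.

Lemma fact_neq0 (a : nat) : (a`!%:R : rat) != 0.
Proof. by rewrite pnatr_eq0 -lt0n fact_gt0. Qed.

Lemma coefE M a : (a <= M)%N -> (E M)`_a = (a`!%:R)^-1.
Proof.
move=> le; rewrite /E coef_sum (bigD1 (Ordinal (le : a < M.+1)%N)) //=.
rewrite coefZ coefXn eqxx mulr1 big1 ?addr0 // => i /eqP ne.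
rewrite coefZ coefXn; case: eqP => [h|]; last by rewrite mulr0.
by exfalso; apply: ne; apply/val_inj; rewrite /= h.
Qed.

Lemma expm1E M : expm1_trunc M = E M - 1.
Proof.
rewrite /expm1_trunc /E big_ord_recl /= expr0 scale1r addrC addKr.
by rewrite big_add1 /= big_mkord; apply: eq_bigr => i _; rewrite /bump /= add1n.
Qed.

Lemma coefEi M i a : (a <= M)%N -> (E M ^+ i)`_a = (i%:R ^+ a) / (a`!%:R).
Proof.
elim: i a => [|i IH] a le.
  rewrite expr0 coefC expr0n; case: a le => [|a] //= _; by rewrite mul0r.
rewrite exprSr coefM.
transitivity ((\sum_(j < a.+1) ((i%:R ^+ j) * ('C(a, j)%:R : rat))) / a`!%:R).
  rewrite [RHS]mulr_suml; apply: eq_bigr => j _.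
  have lj : (j <= a)%N by rewrite -ltnS.
  rewrite IH ?(leq_trans lj) // coefE ?(leq_trans (leq_subr _ _)) //.
  have := bin_fact lj => /(congr1 (fun x => x%:R : rat)).
  rewrite !natrM => h.
  apply: (mulIf (fact_neq0 j)); apply: (mulIf (fact_neq0 (a - j))).
  rewrite -h.
  have hc : ('C(a, j)%:R : rat) != 0 by rewrite pnatr_eq0 -lt0n bin_gt0.
  field. by rewrite !fact_neq0 hc.
congr (_ / _); rewrite -natr1 addrC exprDn; apply: eq_bigr => j _.
by rewrite expr1n mul1r mulr_natr.
Qed.

Definition D (j k : nat) : rat :=
  \sum_(i < j.+1) (((j - i)%:R ^+ k * (-1) ^+ i) *+ 'C(j, i)).

Lemma coefEm1 M j k : (k <= M)%N -> ((E M - 1) ^+ j)`_k = D j k / k`!%:R.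
Proof.
move=> le; rewrite exprDn coef_sum /D mulr_suml; apply: eq_bigr => i _.
rewrite coefMn.
have -> : (-1 : {poly rat}) ^+ i = ((-1) ^+ i)%:P by rewrite rmorphXn rmorphN1.
by rewrite coefMC coefEi // mulrAC mulrnAl.
Qed.

Lemma coef_pow_van (q : {poly rat}) j k : q`_0 = 0 -> (k < j)%N -> (q ^+ j)`_k = 0.
Proof.
move=> q0; elim: j k => [|j IH] k //= lt.
rewrite exprSr coefM big1 // => l _.
have ll : (l <= k)%N by rewrite -ltnS.
case: (ltnP l j) => h; first by rewrite IH // mul0r.
have ek : l = k :> nat by apply/eqP; rewrite eqn_leq ll /= (leq_trans _ h) // -ltnS.
by rewrite ek subnn q0 mulr0.
Qed.

Lemma D_van j k : (k < j)%N -> D j k = 0.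
Proof.
move=> lt; have := @coefEm1 k j k (leqnn k).
rewrite coef_pow_van //; last by rewrite coefB coefE // coefC /= subrr.
move/esym/eqP; rewrite mulf_eq0 invr_eq0 (negbTE (fact_neq0 _)) orbF.
by move/eqP.
Qed.

Definition w (p j : nat) : rat := ('C(j + p, p)%:R)^-1 * (j`!%:R)^-1.

Lemma pBell_D p k N : (k < N)%N -> pBell k p = \sum_(j < N) w p j * D j k.
Proof.
move=> lt; rewrite /pBell expm1E coef_sum mulr_sumr.
transitivity (\sum_(j < k.+1) w p j * D j k).
  apply: eq_bigr => j _; rewrite coefZ coefEm1 // /w.
  by rewrite mulrCA [k`!%:R * _]mulrCA mulfV ?fact_neq0 // mulr1.
rewrite (big_ord_widen N (fun j => w p j * D j k) lt) big_mkcond.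
apply: eq_bigr => j _; case: ifP => // /negbT; rewrite -leqNgt => h.
by rewrite D_van // mulr0.
Qed.

Definition Pq (m : nat) : {poly rat} := \prod_(i < m) ('X - (i%:R)%:P).

Lemma stirlingE m k : (stirling1 m k)%:~R = (Pq m)`_k.
Proof.
have -> : Pq m = map_poly intr
                   (\prod_(i < m) ('X - (i%:R)%:P) : {poly int}).
  rewrite rmorph_prod; apply: eq_bigr => i _.
  by rewrite rmorphB /= map_polyX map_polyC /= natz.
by rewrite coef_map.
Qed.

Lemma Pq_S m : Pq m.+1 = Pq m * ('X - (m%:R)%:P).
Proof. by rewrite /Pq big_ord_recr. Qed.

Lemma size_Pq m : (size (Pq m) <= m.+1)%N.
Proof.
elim: m => [|m IH]; first by rewrite /Pq big_ord0 size_poly1.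
rewrite Pq_S (leq_trans (size_polyMleq _ _)) // size_XsubC addn2 /=.
by rewrite ltnS.
Qed.

Lemma Pq_eval m x : (Pq m).[x] = \prod_(i < m) (x - i%:R).
Proof. by rewrite /Pq horner_prod; apply: eq_bigr => i _; rewrite hornerXsubC. Qed.

Lemma Pq_eval0 m x : (x < m)%N -> (Pq m).[x%:R] = 0.
Proof.
move=> lt; rewrite Pq_eval; apply/eqP/prodf_eq0.
by exists (Ordinal lt) => //=; rewrite subrr.
Qed.

Lemma Pq_evalm m : (Pq m).[m%:R] = m`!%:R.
Proof.
elim: m => [|m IH]; first by rewrite /Pq big_ord0 hornerC.
rewrite Pq_eval big_ord_recl /= subr0 factS natrM; congr (_ * _).
rewrite -IH Pq_eval; apply: eq_bigr => i _.
by rewrite /bump /= add1n -!natr1 opprD addrACA subrr addr0.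
Qed.

Lemma sum_pBell0 p m :
  \sum_(k < m.+1) (Pq m)`_k * pBell k p = ('C(m + p, p)%:R)^-1.
Proof.
under eq_bigr => k _ do rewrite (@pBell_D p k m.+1 (ltn_ord k)) mulr_sumr.
rewrite exchange_big /=.
transitivity (\sum_(j < m.+1) w p j *
   \sum_(i < j.+1) (((Pq m).[(j - i)%:R] * (-1) ^+ i) *+ 'C(j, i))).
  apply: eq_bigr => j _.
  under eq_bigr do rewrite mulrCA.
  rewrite -mulr_sumr; congr (_ * _).
  rewrite /D; under eq_bigr do rewrite mulr_sumr.
  rewrite exchange_big /=; apply: eq_bigr => i _.
  rewrite (horner_coef_wide _ (size_Pq m)) mulr_suml -sumrMnl.
  by apply: eq_bigr => k _; rewrite mulrnAr mulrA.
rewrite (bigD1 ord_max) //= [X in _ + X]big1 => [|j jne].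
  rewrite addr0 big_ord_recl /= subn0 Pq_evalm expr0 mulr1 bin0 mulr1n.
  rewrite big1 => [|i _]; last first.
    by rewrite Pq_eval0 ?mul0r ?mul0rn // /bump /= add1n subnS prednK ?subn_gt0 // leq_subr.
  by rewrite addr0 /w -mulrA mulVf ?fact_neq0 // mulr1.
have ljm : (j < m)%N.
  by move: (ltn_ord j); rewrite ltnS leq_eqVlt => /orP [/eqP h|//]; case/eqP: jne; apply: val_inj.
rewrite big1 ?mulr0 // => i _.
by rewrite Pq_eval0 ?mul0r ?mul0rn // (leq_ltn_trans (leq_subr _ _)).
Qed.

Definition S (p N n : nat) (q : {poly rat}) := \sum_(k < N) q`_k * pBell (n + k) p.

Lemma Zpb_S n m p N : (m < N)%N -> Zpb n m p = 'C(m + p, p)%:R * S p N n (Pq m).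
Proof.
move=> lt; rewrite /Zpb /S; congr (_ * _).
under eq_bigr do rewrite stirlingE.
rewrite (big_ord_widen N (fun k => (Pq m)`_k * pBell (n + k) p) lt) big_mkcond.
apply: eq_bigr => k _; case: ifP => // /negbT; rewrite -leqNgt => h.
by rewrite nth_default ?mul0r // (leq_trans (size_Pq m)).
Qed.

Lemma S_X p N n q : S p N.+1 n ('X * q) = S p N n.+1 q.
Proof.
rewrite /S big_ord_recl coefXM /= mul0r add0r; apply: eq_bigr => i _.
by rewrite coefXM /bump /= add1n addnS.
Qed.

Lemma S_add p N n q r : S p N n (q + r) = S p N n q + S p N n r.
Proof. by rewrite /S -big_split; apply: eq_bigr => i _; rewrite coefD mulrDl. Qed.

Lemma S_scale p N n c q : S p N n (c *: q) = c * S p N n q.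
Proof. by rewrite /S mulr_sumr; apply: eq_bigr => i _; rewrite coefZ mulrA. Qed.

Lemma XPq m : 'X * Pq m = Pq m.+1 + m%:R *: Pq m.
Proof. rewrite Pq_S -mul_polyC; ring. Qed.

Lemma binrel m p : ('C(m.+1 + p, p) * m.+1 = 'C(m + p, p) * (m + p).+1)%N.
Proof.
have := mul_bin_diag (m + p).+1 m; rewrite /= => h.
have e1 : 'C(m + p, p) = 'C(m + p, m) by rewrite -(bin_sub (leq_addl m p)) addnK.
have e2 : 'C(m.+1 + p, p) = 'C((m + p).+1, m.+1).
  by rewrite -(bin_sub (leq_addl m.+1 p)) addnK addSn.
by rewrite e1 e2 mulnC -h mulnC.
Qed.

Theorem mainTheorem9 :
  forall n m p : nat,
    Zpb n.+1 m p = (m.+1%:R / (m + p).+1%:R) * Zpb n m.+1 p + m%:R * Zpb n m p /\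
    Zpb 0 m p = 1 /\
    Zpb n 0 p = pBell n p.
Proof.
move=> n m p; split; last split.
- rewrite (@Zpb_S n.+1 m p m.+2) // -S_X XPq S_add S_scale.
  have l3 : (m < m.+3)%N := leqW (leqW (leqnn m.+1)).
  rewrite (@Zpb_S n m.+1 p m.+3) // (@Zpb_S n m p m.+3 l3).
  have := binrel m p => /(congr1 (fun x => x%:R : rat)); rewrite !natrM => h.
  have hn : ((m + p).+1%:R : rat) != 0 by rewrite pnatr_eq0.
  have -> : ('C(m + p, p)%:R : rat) = 'C(m.+1 + p, p)%:R * m.+1%:R / (m + p).+1%:R.
    by rewrite h mulfK.
  rewrite addSn; field; by move: hn; rewrite -addn1 !natrD addrC.
- rewrite /Zpb; under eq_bigr do rewrite stirlingE add0n.
  rewrite sum_pBell0 mulfV // pnatr_eq0 -lt0n bin_gt0 leq_addl //.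
- rewrite /Zpb big_ord1 /stirling1 big_ord0 coefC /= addn0 add0n binn mul1r.
  by rewrite mul1r.
Qed.
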